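(* Let $m \ge 1$, let $\omega_0 \in \mathbb{R}$, $\gamma > 0$, let $\tilde C \in M_m$ be invertible, and let $\tilde{\boldsymbol\kappa}, \tilde{\boldsymbol d} \in \mathbb{C}^m$ (column vectors). For $\omega \in \mathbb{R}$ define $$\tilde S(\omega) = \tilde C + \frac{\tilde{\boldsymbol d}\,\tilde{\boldsymbol\kappa}^T}{-i(\omega-\omega_0) + \gamma}, \qquad \tilde\rho = -\frac{\tilde{\boldsymbol\kappa}^T \tilde C^{-1}\tilde{\boldsymbol d}}{2\gamma} \in \mathbb{C}.$$ Then as $\omega$ runs over $\mathbb{R}$, $\det\tilde S(\omega)$ traces out a circle in $\mathbb{C}$ (with $\det \tilde S(\omega) \to \det\tilde C$ as $\omega \to \pm\infty$), and: if $\operatorname{Re}\tilde\rho = \tfrac12$ this circle passes through the origin; if $\operatorname{Re}\tilde\rho \neq \tfrac12$ then $\det\tilde S(\omega)\neq 0$ for all real $\omega$ and the winding number of $\det\tilde S$ about the origin satisfies $$\operatorname{wn}(\tilde S) = \begin{cases} 0, & \operatorname{Re}\tilde\rho < \tfrac12,\\ 1, & \operatorname{Re}\tilde\rho > \tfrac12.\end{cases}$$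
   Context: $M_m$ denotes the complex $m\times m$ matrices. The winding number is $\operatorname{wn}(\tilde S) = \frac{1}{2\pi i}\int_{-\infty}^{\infty} \frac{1}{\det\tilde S(\omega)}\frac{d \det\tilde S(\omega)}{d\omega}\,d\omega$, i.e. the net change of a continuous polar angle of $\det\tilde S(\omega)$, divided by $2\pi$, as $\omega$ goes from $-\infty$ to $+\infty$ (the curve closes up since both limits equal $\det\tilde C$). *)

(* Defs.v *)
From HB Require Import structures.
From mathcomp Require Import all_boot all_order all_algebra.
From mathcomp Require Import all_classical all_reals all_analysis.
From mathcomp Require Import complex.
Set Implicit Arguments. Unset Strict Implicit. Unset Printing Implicit Defensive.
Import Order.TTheory GRing.Theory Num.Theory.
Import numFieldNormedType.Exports.
Local Open Scope ring_scope.
Local Open Scope complex_scope.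
Local Open Scope classical_set_scope.

Definition polar_lift (R : realType) (f : R -> R[i]) (theta : R -> R) : Prop :=
  continuous theta /\
  forall w : R, f w = `|f w| * (cos (theta w) +i* sin (theta w)).

Definition winding_number_is (R : realType) (f : R -> R[i]) (n : int) : Prop :=
  (exists theta, polar_lift f theta) /\
  forall theta, polar_lift f theta ->
    exists a b : R,
      (theta x @[x --> -oo] --> a) /\ (theta x @[x --> +oo] --> b) /\
      b - a = (n%:~R) * (2 * pi).

Definition Stilde (R : realType) (m : nat) (C : 'M[R[i]]_m) (kappa d : 'cV[R[i]]_m)
  (w0 gamma w : R) : 'M[R[i]]_m :=
  C + ((- 'i%C * (w - w0)%:C + gamma%:C)^-1) *: (d *m kappa^T).

Definition rhotilde (R : realType) (m : nat) (C : 'M[R[i]]_m) (kappa d : 'cV[R[i]]_m)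
  (gamma : R) : R[i] :=
  - ((kappa^T *m invmx C *m d) ord0 ord0) / (2 * gamma)%:C.

(* Main.v *)
Require Import Defs.
From HB Require Import structures.
From mathcomp Require Import all_boot all_order all_algebra.
From mathcomp Require Import all_classical all_reals all_analysis.
From mathcomp Require Import complex.
From mathcomp Require Import ring lra.
Import Order.TTheory GRing.Theory Num.Theory.
Import numFieldNormedType.Exports.
Local Open Scope ring_scope.
Local Open Scope complex_scope.
Local Open Scope classical_set_scope.
Lemma det1_rank1 (F : comUnitRingType) (n : nat) (u : 'M[F]_(n,1)) (v : 'M[F]_(1,n)) :
  \det (1%:M + u *m v) = 1 + (v *m u) 0 0.
Proof.
have H : (block_mx 1%:M 0 v 1%:M) *m (block_mx (1%:M + u *m v) u 0 1%:M) *m (block_mx 1%:M 0 (-v) 1%:M)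
   = block_mx 1%:M u 0 (1%:M + v *m u).
  rewrite !mulmx_block !(mulmx1, mul1mx, mulmx0, mul0mx, addr0, add0r, mulmxN, mulNmx, mulmxDr, mulmxDl).
  congr block_mx.
  - by rewrite addrK.
  - by rewrite mulmxA -opprD [v *m u *m v + v]addrC subrr.
  - by rewrite addrC.
have := congr1 determinant H.
rewrite !det_mulmx det_lblock det_ublock det_lblock det_ublock !det1 !mul1r !mulr1 det_mx11.
move=> ->.  by rewrite !mxE eqxx.
Qed.

Lemma detS_eq (R : realType) (m : nat) (C : 'M[R[i]]_m) (hC : C \in unitmx)
  (kappa d : 'cV[R[i]]_m) (w0 gamma w : R) :
  \det (Stilde C kappa d w0 gamma w) =
  \det C * (1 + (- 'i%C * (w - w0)%:C + gamma%:C)^-1 * (kappa^T *m invmx C *m d) ord0 ord0).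
Proof.
rewrite /Stilde.
set s := (_ ^-1).
have -> : C + s *: (d *m kappa^T) = C *m (1%:M + (s *: (invmx C *m d)) *m kappa^T).
  rewrite mulmxDr mulmx1 -scalemxAl -scalemxAr.
  by rewrite [X in _ = _ + _ *: X]mulmxA (mulmxA C (invmx C) d) (mulmxV hC) mul1mx.
rewrite det_mulmx det1_rank1; congr (_ * (1 + _)).
by rewrite -scalemxAr mxE mulmxA.
Qed.
Section Trig.
Variable R : realType.
Definition E (t : R) : R[i] := cos t +i* sin t.

Lemma E_add a b : E (a + b) = E a * E b.
Proof. by rewrite /E cosD sinD; apply/eqP; rewrite eq_complex /= eqxx /= addrC eqxx. Qed.

Lemma normE t : `|E t| = 1.
Proof. by rewrite /E normc_def /= cos2Dsin2 sqrtr1. Qed.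

Lemma Epi t : E (t + pi) = - E t.
Proof. by rewrite /E cosDpi sinDpi. Qed.

Lemma sin_atan (x : R) : sin (atan x) = x * (Num.sqrt (1 + x ^+ 2))^-1.
Proof.
have c0 : cos (atan x) != 0.
  by apply/lt0r_neq0/cos_gt0_pihalf; rewrite atan_gtNpi2 atan_ltpi2.
by rewrite -(cos_atan x) -{2}(atanK x) /tan divfK.
Qed.

Lemma polar_pos (x y : R) : 0 < x ->
  x +i* y = (Num.sqrt (x ^+ 2 + y ^+ 2))%:C * E (atan (y / x)).
Proof.
move=> x0.
set s := Num.sqrt (1 + (y / x) ^+ 2).
have s0 : 0 < s by rewrite sqrtr_gt0 ltr_pwDl // sqr_ge0.
have -> : Num.sqrt (x ^+ 2 + y ^+ 2) = x * s.
  rewrite /s -[X in X * _](ger0_norm (ltW x0)) -sqrtr_sqr -sqrtrM ?sqr_ge0 //.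
  apply: congr1; field; exact: lt0r_neq0.
rewrite /E cos_atan sin_atan -/s; apply/eqP; rewrite eq_complex /=.
apply/andP; split; apply/eqP; field; apply/andP; split; exact: lt0r_neq0.
Qed.

Lemma polar_neg (x y : R) : x < 0 ->
  x +i* y = (Num.sqrt (x ^+ 2 + y ^+ 2))%:C * E (pi + atan (y / x)).
Proof.
move=> x0.
have := @polar_pos (-x) (-y); rewrite oppr_gt0 => /(_ x0).
rewrite !sqrrN invrN mulrNN [pi + _]addrC Epi mulrN => <-.
by apply/eqP; rewrite eq_complex /= !opprK !eqxx.
Qed.

Lemma polar_norm (z : R[i]) (r t : R) : 0 <= r -> z = r%:C * E t -> `|z| = r%:C.
Proof.
move=> r0 ->; rewrite normrM normE mulr1 ger0_norm // ler0c //.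
Qed.

Lemma E_sub a b : E (a - b) = E a / E b.
Proof.
have Eb : E b != 0 by rewrite -normr_eq0 normE oner_eq0.
have -> : a = (a - b) + b by ring.
by rewrite addrK [in RHS]E_add mulfK.
Qed.

Lemma polar_pos' (x y : R) : 0 < x -> x +i* y = `|x +i* y| * E (atan (y / x)).
Proof.
move=> x0; have h := polar_pos x y x0.
by rewrite (polar_norm _ _ _ (sqrtr_ge0 _) h).
Qed.

Lemma polar_neg' (x y : R) : x < 0 -> x +i* y = `|x +i* y| * E (pi + atan (y / x)).
Proof.
move=> x0; have h := polar_neg x y x0.
by rewrite (polar_norm _ _ _ (sqrtr_ge0 _) h).
Qed.

Lemma polar_any (z : R[i]) : z != 0 -> exists t, z = `|z| * E t.
Proof.
case: z => x y nz.
case: (ltgtP x 0) => hx.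
- by exists (pi + atan (y / x)); exact: polar_neg'.
- by exists (atan (y / x)); exact: polar_pos'.
- subst x.
  have y0 : y != 0 by apply: contra nz => /eqP ->.
  rewrite normc_def /= expr0n /= add0r sqrtr_sqr.
  case: (ltgtP y 0) => hy; last by rewrite hy eqxx in y0.
  + exists (- (pi / 2)); rewrite /E cosN sinN cos_pihalf sin_pihalf ltr0_norm //.
    by apply/eqP; rewrite eq_complex /=; apply/andP; split; apply/eqP; ring.
  + exists (pi / 2); rewrite /E cos_pihalf sin_pihalf gtr0_norm //.
    by apply/eqP; rewrite eq_complex /=; apply/andP; split; apply/eqP; ring.
Qed.

Lemma lift_quot (D : R[i]) (phi : R) (u v : R[i]) (al be : R) :
  D = `|D| * E phi -> u = `|u| * E al -> v = `|v| * E be -> v != 0 ->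
  D * u / v = `|D * u / v| * E (phi + al - be).
Proof.
move=> hD hu hv v0.
have Eb : E be != 0 by rewrite -normr_eq0 normE oner_eq0.
have nv : `|v| != 0 by rewrite normr_eq0.
rewrite E_sub E_add normrM normfV normrM.
rewrite {1}hD {1}hu {1}hv.
by field; apply/andP; split.
Qed.
End Trig.
Section Lift.
Variable R : realType.

Lemma cos_lt1 (t : R) : 0 < t < pi *+ 2 -> cos t < 1.
Proof.
move=> /andP[t0 t2].
have -> : t = t / 2 + t / 2 by field.
rewrite cosD -!expr2 cos2sin2.
have : 0 < sin (t / 2).
  apply: sin_gt0_pi; rewrite divr_gt0 //=.
  by rewrite ltr_pdivrMr // mulr_natr.
move=> s0; have := exprn_gt0 2 s0; lra.
Qed.

Lemma cos1_far (t : R) : cos t = 1 -> t != 0 -> pi *+ 2 <= `|t|.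
Proof.
move=> c1 t0; rewrite leNgt; apply/negP => ht.
have := @cos_lt1 `|t|; rewrite normr_gt0 t0 ht /= => /(_ isT).
by case: (ger0P t) => _; rewrite ?cosN c1 ltxx.
Qed.

Lemma const_cos1 (d : R -> R) : continuous d -> (forall w, cos (d w) = 1) ->
  forall x y, d x = d y.
Proof.
move=> dc dc1.
have key : forall x y, x <= y -> d x = d y.
  move=> x y xy; apply/eqP; apply/negP => /negP dne.
  have cxy : cos (d y - d x) = 1.
    have sx : sin (d x) = 0.
      have h := cos2Dsin2 (d x); rewrite dc1 expr1n in h; apply/eqP; rewrite -sqrf_eq0; apply/eqP; lra.
    have sy : sin (d y) = 0.
      have h := cos2Dsin2 (d y); rewrite dc1 expr1n in h; apply/eqP; rewrite -sqrf_eq0; apply/eqP; lra.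
    by rewrite cosD cosN sinN sx sy !dc1; lra.
  have := @cos1_far _ cxy; rewrite subr_eq0 eq_sym dne => /(_ isT) far.
  have pi0 : 0 < (pi : R) := pi_gt0 R.
  set v := if d x < d y then d x + pi else d x - pi.
  have [c _ hc] : exists2 c, c \in `[x, y]%R & d c = v.
    apply: (@IVT R d x y v xy); first exact: continuous_subspaceT.
    rewrite /v; case: ifP => hl.
    - have hl' : d x <= d y by apply: ltW.
      rewrite ger0_norm ?subr_ge0 // mulr2n in far.
      rewrite ge_min le_max; apply/andP; split; apply/orP; [left|right]; lra.
    - move/negbT: hl; rewrite -leNgt => hl.
      rewrite ler0_norm ?subr_le0 // mulr2n in far.
      rewrite ge_min le_max; apply/andP; split; apply/orP; [right|left]; lra.
  have := dc1 c; rewrite hc /v; case: ifP => _.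
  + rewrite cosDpi dc1; lra.
  + have -> : d x - pi = (d x - pi *+ 2) + pi by rewrite mulr2n; lra.
    rewrite cosDpi. have := cosD2pi (d x - pi *+ 2). rewrite subrK dc1 => <-; lra.
move=> x y; case: (leP x y) => h; first exact: key.
by apply/esym/key/ltW.
Qed.

Lemma lift_shift (f : R -> R[i]) th1 th2 : (forall w, f w != 0) ->
  polar_lift f th1 -> polar_lift f th2 -> exists k, forall w, th2 w = th1 w + k.
Proof.
move=> fn0 [c1 h1] [c2 h2].
have dc : continuous (fun w => th2 w - th1 w).
  by move=> x; apply: cvgB; [exact: c2 | exact: c1].
have dc1 : forall w, cos (th2 w - th1 w) = 1.
  move=> w.
  have nz : `|f w| != 0 by rewrite normr_eq0.
  have := h1 w; rewrite {1}(h2 w) => /(mulfI nz) /eqP.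
  rewrite eq_complex /= => /andP[/eqP e1 /eqP e2].
  by rewrite cosD cosN sinN e1 e2 mulrN opprK -!expr2 cos2Dsin2.
exists (th2 0 - th1 0) => w.
have := const_cos1 _ dc dc1 w 0; lra.
Qed.

Lemma winding_of (f : R -> R[i]) th (n : int) a b : (forall w, f w != 0) ->
  polar_lift f th -> th x @[x --> -oo] --> a -> th x @[x --> +oo] --> b ->
  b - a = n%:~R * (2 * pi) -> winding_number_is f n.
Proof.
move=> fn0 hth ha hb hab; split; first by exists th.
move=> th' hth'; have [k hk] := lift_shift _ _ _ fn0 hth hth'.
exists (a + k), (b + k); split; last split.
- under eq_fun do rewrite hk. by apply: cvgD => //; exact: cvg_cst.
- under eq_fun do rewrite hk. by apply: cvgD => //; exact: cvg_cst.
- by rewrite -hab; lra.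
Qed.
End Lift.
Section Lim.
Variable R : realType.

Lemma div_py (c k : R) : 0 < k -> (fun w => (w - c) * k) @ +oo --> +oo.
Proof.
move=> k0; apply/cvgryPge => A.
have := nbhs_pinfty_gt (num_real (A / k + c)); apply: filterS => w hw.
have -> : A = (A / k) * k by rewrite divfK // lt0r_neq0.
rewrite ler_pM2r //; lra.
Qed.

Lemma div_ny (c k : R) : 0 < k -> (fun w => (c - w) * k) @ -oo --> +oo.
Proof.
move=> k0; apply/cvgryPge => A.
have := nbhs_ninfty_lt (num_real (c - A / k)); apply: filterS => w hw.
have -> : A = (A / k) * k by rewrite divfK // lt0r_neq0.
rewrite ler_pM2r //; lra.
Qed.

Lemma atan_div (g : R -> R) (F : set_system R) : Filter F -> g @ F --> +oo ->
  atan (g x) @[x --> F] --> pi / 2.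
Proof. by move=> FF hg; exact: (cvg_comp _ _ hg (@cvgy_atan R)). Qed.

Lemma atan_py (c k : R) : 0 < k -> atan ((c - w) * k) @[w --> +oo] --> - (pi / 2).
Proof.
move=> k0.
have -> : (fun w => atan ((c - w) * k)) = (fun w => - atan ((w - c) * k)).
  by apply: funext => w; rewrite -atanN -mulNr opprB.
by apply: cvgN; apply: atan_div; exact: div_py.
Qed.

Lemma atan_ny (c k : R) : 0 < k -> atan ((c - w) * k) @[w --> -oo] --> pi / 2.
Proof. by move=> k0; apply: atan_div; exact: div_ny. Qed.

Lemma atan_py' (c k : R) : k < 0 -> atan ((c - w) * k) @[w --> +oo] --> pi / 2.
Proof.
move=> k0.
have -> : (fun w => atan ((c - w) * k)) = (fun w => atan ((w - c) * - k)).
  by apply: funext => w; rewrite mulrN -mulNr opprB.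
by apply: atan_div; apply: div_py; rewrite oppr_gt0.
Qed.

Lemma atan_ny' (c k : R) : k < 0 -> atan ((c - w) * k) @[w --> -oo] --> - (pi / 2).
Proof.
move=> k0.
have -> : (fun w => atan ((c - w) * k)) = (fun w => - atan ((c - w) * - k)).
  by apply: funext => w; rewrite mulrN atanN opprK.
by apply: cvgN; apply: atan_div; apply: div_ny; rewrite oppr_gt0.
Qed.

Lemma atan_cont (c k : R) : continuous (fun w => atan ((c - w) * k)).
Proof.
move=> x; apply: (continuous_comp (f := fun w => (c - w) * k)); last exact: continuous_atan.
by apply: cvgM; [apply: cvgB; [exact: cvg_cst | exact: cvg_id] | exact: cvg_cst].
Qed.
End Lim.
Section Cx.
Variable R : realType.

Lemma z_eq (w w0 g : R) : - 'i%C * (w - w0)%:C + g%:C = g +i* (-(w - w0)) :> R[i].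
Proof. by apply/eqP; rewrite eq_complex /=; apply/andP; split; apply/eqP; ring. Qed.

Lemma realC_inv (x : R) : (x%:C)^-1 = (x^-1)%:C :> R[i].
Proof. by rewrite fmorphV. Qed.

Lemma zinv0 (w0 g : R) (F : set_system R) : ProperFilter F -> 0 < g ->
  (forall M, \forall w \near F, M < `|w - w0|) ->
  ((fun w => (g +i* (- (w - w0)))^-1) : R -> R[i]^o) @ F --> (0 : R[i]^o).
Proof.
move=> FF g0 HF; apply/cvgr0Pnorm_lt => eps eps0.
have := eps0; rewrite ltcE /= => /andP[/eqP eI e0].
have -> : eps = (complex.Re eps)%:C by apply/eqP; rewrite eq_complex /= eqxx eI eqxx.
have := HF (complex.Re eps)^-1; apply: filterS => w hw.
rewrite normfV normc_def /= realC_inv ltcR.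
have t0 : 0 < `|w - w0| by apply: lt_trans hw; rewrite invr_gt0.
have s0 : 0 < Num.sqrt (g ^+ 2 + (- (w - w0)) ^+ 2).
  by rewrite sqrtr_gt0; apply: ltr_pwDl; [rewrite exprn_gt0 | rewrite sqr_ge0].
rewrite invf_plt ?posrE //; apply: (lt_le_trans hw).
rewrite -sqrtr_sqr ler_sqrt; last by apply: addr_ge0; apply: sqr_ge0.
by rewrite sqrrN lerDr sqr_ge0.
Qed.
End Cx.
Lemma lim_aux (R : realType) (K : numFieldType) (F : set_system R) (FF : Filter F)
  (g : R -> K^o) (D a : K^o) :
  g @ F --> (0 : K^o) -> (fun w => D * (1 + g w * a) : K^o) @ F --> D.
Proof.
move=> h.
have := cvgM (cvg_cst D) (cvgD (cvg_cst (1 : K^o)) (cvgM h (cvg_cst a))).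
rewrite mul0r addr0 mulr1; exact.
Qed.

Theorem mainTheorem2 (R : realType) (m : nat) (hm : (1 <= m)%N) (w0 gamma : R)
  (hgamma : 0 < gamma) (C : 'M[R[i]]_m) (hC : C \in unitmx)
  (kappa d : 'cV[R[i]]_m) :
  let f : R -> R[i] := fun w : R => \det (Stilde C kappa d w0 gamma w) in
  let rho := rhotilde C kappa d gamma in
  ((f : R -> R[i]^o) w @[w --> +oo] --> (\det C : R[i]^o)) /\ ((f : R -> R[i]^o) w @[w --> -oo] --> (\det C : R[i]^o)) /\
  exists (c : R[i]) (r : R), 0 <= r /\
    (* the curve lies on the circle |z - c| = r, which contains det C, and
       covers every point of the circle other than det C *)
    (forall w : R, `|f w - c| = r%:C) /\
    `|\det C - c| = r%:C /\
    (forall z : R[i], `|z - c| = r%:C -> z != \det C -> exists w : R, f w = z) /\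
    (complex.Re rho = (1 / 2 : R) -> `|c| = r%:C) /\
    (complex.Re rho != (1 / 2 : R) ->
       (forall w : R, f w != 0) /\
       (complex.Re rho < (1 / 2 : R) -> winding_number_is f 0) /\
       (complex.Re rho > (1 / 2 : R) -> winding_number_is f 1)).
Proof.
move=> f rho.
set a := (kappa^T *m invmx C *m d) ord0 ord0.
set D := \det C.
have D0 : D != 0 by rewrite -unitfE -unitmxE.
pose Z (w : R) : R[i] := gamma +i* (-(w - w0)).
have Z0 : forall w, Z w != 0.
  move=> w; rewrite eq_complex /= negb_and; apply/orP; left; exact: lt0r_neq0.
have fE : forall w, f w = D * (1 + (Z w)^-1 * a).
  by move=> w; rewrite /f detS_eq // z_eq.
set p := complex.Re a.
set q := complex.Im a.
have aE : a = p +i* q by apply/eqP; rewrite eq_complex /= !eqxx.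
have rhoRe : complex.Re rho = - p / (2 * gamma).
  rewrite /rho /rhotilde -/a aE realC_inv /=. ring.
have fE' : f = (fun w => D * (1 + (Z w)^-1 * a)) by apply: funext.
have lim0 : forall F, ProperFilter F -> (forall M, \forall w \near F, M < `|w - w0|) ->
    (f : R -> R[i]^o) @ F --> (D : R[i]^o).
  move=> F FF HF; rewrite fE'.
  have h := zinv0 _ _ _ _ FF hgamma HF.
  exact: (@lim_aux _ _ _ _ _ D a h).
split.
  apply: lim0 => M.
  have := nbhs_pinfty_gt (num_real (M + w0)); apply: filterS => w hw.
  by apply: lt_le_trans (ler_norm _); lra.
split.
  apply: lim0 => M.
  have := nbhs_ninfty_lt (num_real (w0 - M)); apply: filterS => w hw.
  by rewrite distrC; apply: lt_le_trans (ler_norm _); lra.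
have g20 : 0 < 2 * gamma by lra.
pose c := D * (1 + a / (2 * gamma)%:C).
pose r := Num.sqrt (complex.Re (D * a) ^+ 2 + complex.Im (D * a) ^+ 2) / (2 * gamma).
have g2 : (2 * gamma)%:C != 0 :> R[i].
  by rewrite eq_complex /= negb_and lt0r_neq0.
have gC : gamma%:C != 0 :> R[i].
  by rewrite eq_complex /= negb_and lt0r_neq0.
have rC : r%:C = `|D * a| / (2 * gamma)%:C.
  by rewrite normc_def /r rmorphM /= realC_inv.
have nZ : forall w, `|(2 * gamma)%:C - Z w| = `|Z w|.
  move=> w; have -> : (2 * gamma)%:C - Z w = (Z w)^*%C.
    by apply/eqP; rewrite eq_complex /=; apply/andP; split; apply/eqP; ring.
  by rewrite normcJ.
have n2 : `|(2 * gamma)%:C| = (2 * gamma)%:C :> R[i].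
  by rewrite ger0_norm // ler0c ltW.
exists c, r.
split; first by rewrite /r divr_ge0 // ?sqrtr_ge0 ?ltW.
split.
  move=> w; rewrite fE.
  have -> : D * (1 + (Z w)^-1 * a) - c = (D * a) * ((2 * gamma)%:C - Z w) / (Z w * (2 * gamma)%:C).
    by rewrite /c; field; rewrite Z0 gC.
  have nZw : `|Z w| != 0 by rewrite normr_eq0.
  rewrite normrM normfV [`|Z w * _|]normrM [`|_ * ((2 * gamma)%:C - Z w)|]normrM nZ n2 rC.
  by field; rewrite nZw gC.
split.
  have -> : D - c = - (D * a) / (2 * gamma)%:C by rewrite /c; field.
  by rewrite normrM normfV normrN n2 rC.
split.
  move=> zt hz hne.
  have nDa0 : D * a != 0.
    apply/eqP => Da0; move/eqP: hne; apply.
    have : `|zt - c| = 0 by rewrite hz rC Da0 normr0 mul0r.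
    move/eqP; rewrite normr_eq0 subr_eq0 => /eqP ->.
    rewrite /c; move/eqP: Da0; rewrite mulf_eq0 (negbTE D0) /= => /eqP ->.
    by rewrite mul0r addr0 mulr1.
  have a0 : a != 0 by move: nDa0; rewrite mulf_eq0 negb_or => /andP[].
  set u := (zt / D - 1) / a.
  have zE : zt = D * (1 + u * a) by rewrite /u; field; rewrite a0 D0.
  have hzc : zt - c = (D * a) * (u - ((2 * gamma)%:C)^-1) by rewrite zE /c; field.
  rewrite hzc normrM rC in hz.
  have nDa : `|D * a| != 0 by rewrite normr_eq0.
  have hu : `|u - ((2 * gamma)%:C)^-1| = ((2 * gamma)^-1)%:C.
    by apply: (mulfI nDa); rewrite hz realC_inv.
  set x := complex.Re u; set y := complex.Im u.
  have uE : u = x +i* y by apply/eqP; rewrite eq_complex /= !eqxx.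
  rewrite uE realC_inv normc_def /= in hu.
  move/complexI: hu => hu.
  have h2 := congr1 (fun t => t ^+ 2) hu; rewrite /= sqr_sqrtr in h2; last first.
    by apply: addr_ge0; apply: sqr_ge0.
  have hN : x ^+ 2 + y ^+ 2 = x / gamma.
    have e : x ^+ 2 + y ^+ 2 = ((x + - (2 * gamma)^-1) ^+ 2 + (y + - 0) ^+ 2 - ((2 * gamma)^-1) ^+ 2) + x / gamma.
      by field; exact: lt0r_neq0.
    by rewrite h2 subrr add0r in e.
  have x0 : x != 0.
    apply/eqP => x0; move/eqP: hne; apply.
    rewrite x0 mul0r expr0n /= add0r in hN.
    move/eqP: hN; rewrite sqrf_eq0 => /eqP y0.
    have u0 : u = 0 by rewrite uE x0 y0.
    by rewrite zE u0 mul0r addr0 mulr1.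
  exists (w0 + y * gamma / x).
  have hZu : Z (w0 + y * gamma / x) * u = 1.
    rewrite uE /Z; apply/eqP; rewrite eq_complex /=; apply/andP; split; apply/eqP.
    + transitivity (gamma * (x ^+ 2 + y ^+ 2) / x); first by field.
      by rewrite hN; field; rewrite x0 lt0r_neq0.
    + by field.
  rewrite fE; have -> : (Z (w0 + y * gamma / x))^-1 = u.
    by rewrite -(mulr1 (Z _)^-1) -hZu mulKf // Z0.
  by rewrite [in RHS]zE.
split.
  move=> h12.
  have hp : p = - gamma.
    have h := h12; rewrite rhoRe in h.
    have e : p = - (- p / (2 * gamma)) * (2 * gamma) by field; exact: lt0r_neq0.
    by rewrite h in e; rewrite e; field.
  rewrite /c; have -> : D * (1 + a / (2 * gamma)%:C) = D * ((2 * gamma)%:C + a) / (2 * gamma)%:C by field.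
  rewrite normrM normfV normrM n2 rC normrM.
  have -> : `|(2 * gamma)%:C + a| = `|a|.
    by rewrite aE hp !normc_def /=; congr (_%:C); congr Num.sqrt; ring.
  by [].
move=> hne.
have sgn : gamma + p != 0.
  apply: contra hne => /eqP h0; rewrite rhoRe; apply/eqP.
  have -> : p = - gamma by lra.
  by field; exact: lt0r_neq0.
have Za : forall w, Z w + a = (gamma + p) +i* (q - (w - w0)).
  by move=> w; rewrite aE; apply/eqP; rewrite eq_complex /=; apply/andP; split; apply/eqP; ring.
have fQ : forall w, f w = D * (Z w + a) / Z w.
  by move=> w; rewrite fE; field; exact: Z0 w.
have fn0 : forall w, f w != 0.
  move=> w; rewrite fQ; apply: mulf_neq0; last by rewrite invr_eq0 Z0.
  by apply: mulf_neq0 => //; rewrite Za eq_complex /= negb_and sgn.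
split => //.
have [phi hphi] := polar_any _ _ D0.
have hZ : forall w, Z w = `|Z w| * E _ (atan ((w0 - w) * gamma^-1)).
  move=> w; have -> : (w0 - w) * gamma^-1 = (-(w - w0)) / gamma by ring.
  exact: polar_pos'.
have gi : 0 < gamma^-1 by rewrite invr_gt0.
have wn : forall (al : R -> R) (n : int) (A B : R),
    (forall w, Z w + a = `|Z w + a| * E _ (al w)) -> continuous al ->
    al x @[x --> -oo] --> A -> al x @[x --> +oo] --> B ->
    (phi + B - - (pi / 2)) - (phi + A - pi / 2) = n%:~R * (2 * pi) ->
    winding_number_is f n.
  move=> al n A B hal alc hA hB hn.
  apply: (winding_of _ f (fun w => phi + al w - atan ((w0 - w) * gamma^-1)) n
            (phi + A - pi / 2) (phi + B - - (pi / 2))) => //.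
  - split.
      move=> x; apply: cvgB; first by apply: cvgD; [exact: cvg_cst | exact: alc].
      exact: atan_cont.
    by move=> w; rewrite fQ; exact: (lift_quot _ _ _ _ _ _ _ hphi (hal w) (hZ w) (Z0 w)).
  - by apply: cvgB; [apply: cvgD => //; exact: cvg_cst | exact: atan_ny].
  - by apply: cvgB; [apply: cvgD => //; exact: cvg_cst | exact: atan_py].
split.
  move=> hlt.
  have gp : 0 < gamma + p.
    have : - p / (2 * gamma) < 1 / 2 by rewrite -rhoRe.
    rewrite ltr_pdivrMr //; lra.
  have gpi : 0 < (gamma + p)^-1 by rewrite invr_gt0.
  apply: (wn (fun w => atan ((q + w0 - w) * (gamma + p)^-1)) 0 (pi / 2) (- (pi / 2))).
  - move=> w; have -> : (q + w0 - w) * (gamma + p)^-1 = (q - (w - w0)) / (gamma + p) by ring.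
    by rewrite Za; exact: polar_pos'.
  - exact: atan_cont.
  - exact: atan_ny.
  - exact: atan_py.
  - by rewrite mul0r; lra.
move=> hgt.
have gp : gamma + p < 0.
  have : 1 / 2 < - p / (2 * gamma) by rewrite -rhoRe.
  rewrite ltr_pdivlMr //; lra.
have gpi : (gamma + p)^-1 < 0 by rewrite invr_lt0.
apply: (wn (fun w => pi + atan ((q + w0 - w) * (gamma + p)^-1)) 1 (pi - pi / 2) (pi + pi / 2)).
- move=> w; have -> : (q + w0 - w) * (gamma + p)^-1 = (q - (w - w0)) / (gamma + p) by ring.
  by rewrite Za; exact: polar_neg'.
- by move=> x; apply: cvgD; [exact: cvg_cst | exact: atan_cont].
- by apply: cvgD; [exact: cvg_cst | exact: atan_ny'].
- by apply: cvgD; [exact: cvg_cst | exact: atan_py'].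
- by rewrite mul1r; lra.
Qed.
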